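(* For any $\mathcal{H}\subseteq\{0,1\}^{\mathcal{X}}$, there exists a deterministic online learner which, under apple tasting feedback, makes at most $\operatorname{AL}_1(\mathcal{H})$ mistakes on any sequence $(x_1,y_1),\dots,(x_T,y_T)$ realizable by $\mathcal{H}$ (i.e. $y_t=h(x_t)$ for all $t$ for some $h\in\mathcal{H}$).
   Context: Apple tasting feedback: in each round the learner receives $x_t\in\mathcal{X}$, predicts $\hat y_t\in\{0,1\}$, and observes the true label $y_t$ only if $\hat y_t=1$; a mistake is a round with $\hat y_t\ne y_t$. AL tree of width $w\in\mathbb{N}$ and depth $d$: a binary string $u$ is an internal node if $|u|<d$ and $u$ has fewer than $w$ ones; the tree assigns $x_u\in\mathcal{X}$ to each internal node. A path is a binary string $\sigma$ whose proper prefixes are all internal nodes but which is not itself one. The tree is shattered by $\mathcal{H}$ if for every path $\sigma$ some $h\in\mathcal{H}$ satisfies $h(x_{(\sigma_1,\dots,\sigma_{i-1})})=\sigma_i$ for all $i\le|\sigma|$. $\operatorname{AL}_w(\mathcal{H})$ is the largest $d$ such that such a tree of width $w$ and depth $d$ is shattered ($\infty$ if unbounded, $0$ if none). (For $w=1$: internal nodes are the strings $0^k$, $k<d$, and paths are $0^d$ and $0^k1$ for $k<d$.) *)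

(* Defs.v *)
From mathcomp Require Import all_boot.
From Stdlib Require Import ClassicalEpsilon.
Set Implicit Arguments. Unset Strict Implicit. Unset Printing Implicit Defensive.

(* History entry for round s: the instance x_s and the feedback, which is
   Some y_s if the learner predicted 1 (label revealed) and None if it
   predicted 0 (label not revealed). *)
Definition history (X : Type) := seq (X * option bool).

Definition learner (X : Type) := history X -> X -> bool.

Fixpoint mistakes_from (X : Type) (L : learner X) (hist : history X)
    (s : seq (X * bool)) : nat :=
  match s with
  | [::] => 0
  | (x, y) :: s' =>
      let p := L hist x in
      (p != y) + mistakes_from L (rcons hist (x, if p then Some y else None)) s'
  end.

Definition mistakes (X : Type) (L : learner X) (s : seq (X * bool)) : nat :=
  mistakes_from L [::] s.

Definition realizable (X : Type) (H : (X -> bool) -> Prop) (s : seq (X * bool)) :=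
  exists h, H h /\ all (fun p => h p.1 == p.2) s.

Definition AL_internal (w d : nat) (u : seq bool) : bool :=
  (size u < d) && (count id u < w).

Definition AL_path (w d : nat) (sigma : seq bool) : Prop :=
  (forall i, i < size sigma -> AL_internal w d (take i sigma)) /\
  ~~ AL_internal w d sigma.

(* The tree (labelling x of internal nodes) of width w and depth d is
   shattered by H. Labels of non-internal strings are irrelevant. *)
Definition AL_shattered (X : Type) (H : (X -> bool) -> Prop) (w d : nat)
    (x : seq bool -> X) : Prop :=
  forall sigma, AL_path w d sigma ->
    exists h, H h /\
      forall i, i < size sigma -> h (x (take i sigma)) = nth false sigma i.

Definition AL_ub (X : Type) (H : (X -> bool) -> Prop) (w k : nat) : Prop :=
  forall d (x : seq bool -> X), AL_shattered H w d x -> d <= k.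

Definition decP (P : Prop) : bool :=
  if excluded_middle_informative P then true else false.

Lemma AL_ub_ex (X : Type) (H : (X -> bool) -> Prop) (w : nat) :
  (exists k, AL_ub H w k) -> exists k, decP (AL_ub H w k).
Proof.
move=> [k Hk]; exists k; rewrite /decP.
by case: excluded_middle_informative.
Qed.

(* AL_w(H) as an extended natural number: None = infinity; otherwise the
   largest depth of a shattered tree (= least upper bound; 0 if none). *)
Definition AL (X : Type) (H : (X -> bool) -> Prop) (w : nat) : option nat :=
  match excluded_middle_informative (exists k, AL_ub H w k) with
  | left ex => Some (ex_minn (AL_ub_ex ex))
  | right _ => None
  end.

Definition le_ext (m : nat) (a : option nat) : Prop :=
  match a with Some k => m <= k | None => True end.

(* Main.v *)
Require Import Defs.
From mathcomp Require Import all_boot.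
From Stdlib Require Import ClassicalEpsilon Lia.
From mathcomp Require Import zify.
Set Implicit Arguments. Unset Strict Implicit. Unset Printing Implicit Defensive.

Section Learn.
Variables (X : Type) (H : (X -> bool) -> Prop).

Definition consistent (h : X -> bool) (hist : history X) : bool :=
  all (fun p => match p.2 with Some y => h p.1 == y | None => true end) hist.

Definition Lrn : learner X := fun hist x =>
  Defs.decP (exists h, H h /\ consistent h hist /\ h x).

Lemma decPP (P : Prop) : Defs.decP P -> P.
Proof. by rewrite /Defs.decP; case: excluded_middle_informative. Qed.

Lemma decPT (P : Prop) : P -> Defs.decP P.
Proof. by rewrite /Defs.decP; case: excluded_middle_informative. Qed.

Variable x0 : X.

Definition chainp (c : seq X) : Prop :=
  forall k, k < size c -> exists h, H h /\
    (forall j, j < k -> h (nth x0 c j) = false) /\ h (nth x0 c k).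

Definition zeroon (h : X -> bool) (c : seq X) : Prop :=
  forall j, j < size c -> h (nth x0 c j) = false.

Lemma main_lem (hs : X -> bool) (Hs : H hs) s : forall hist c,
  consistent hs hist -> all (fun p => hs p.1 == p.2) s ->
  chainp c -> (forall h, H h -> consistent h hist -> zeroon h c) ->
  exists c', size c' = size c + mistakes_from Lrn hist s /\ chainp c' /\ zeroon hs c'.
Proof.
elim: s => [|[x y] s IH] hist c Hc Hall Hch Hz /=.
  by exists c; rewrite addn0; split => //; split => //; apply: Hz.
move: Hall => /= /andP [/eqP Hy Hall].
case Hp: (Lrn hist x).
- have [h [Hh [Hhc Hhx]]] := decPP Hp.
  case: y Hy => Hy /=.
  + have S1 : consistent hs (rcons hist (x, Some true)).
      by rewrite /consistent all_rcons -/(consistent hs hist) Hc /= Hy.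
    have S2 : forall h, H h -> consistent h (rcons hist (x, Some true)) -> zeroon h c.
      move=> h' Hh'; rewrite /consistent all_rcons => /andP [_ ?]; exact: Hz.
    have [c' [E [C Z]]] := IH (rcons hist (x, Some true)) c S1 Hall Hch S2.
    by exists c'; rewrite E.
  + have S1 : consistent hs (rcons hist (x, Some false)).
      by rewrite /consistent all_rcons -/(consistent hs hist) Hc /= Hy.
    have S2 : chainp (rcons c x).
      move=> k; rewrite size_rcons ltnS leq_eqVlt => /orP [/eqP -> | Hk].
        exists h; split => //; split.
          by move=> j Hj; rewrite nth_rcons Hj; apply: Hz.
        by rewrite nth_rcons ltnn eqxx.
      have [h' [H1 [H2 H3]]] := Hch k Hk.
      exists h'; split => //; split.
        by move=> j Hj; rewrite nth_rcons (ltn_trans Hj Hk); apply: H2.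
      by rewrite nth_rcons Hk.
    have S3 : forall h, H h -> consistent h (rcons hist (x, Some false)) -> zeroon h (rcons c x).
      move=> h' Hh'; rewrite /consistent all_rcons => /andP [/= /eqP Hx Hc'] j.
      rewrite size_rcons ltnS leq_eqVlt nth_rcons => /orP [/eqP -> | Hj].
        by rewrite ltnn eqxx.
      by rewrite Hj; apply: Hz.
    have [c' [E [C Z]]] := IH (rcons hist (x, Some false)) (rcons c x) S1 Hall S2 S3.
    by exists c'; rewrite E size_rcons add1n addSnnS.
- case: y Hy => Hy.
    by move: Hp; rewrite /Lrn decPT //; exists hs.
  have S1 : consistent hs (rcons hist (x, None)) by rewrite /consistent all_rcons -/(consistent hs hist) Hc.
  have S2 : forall h, H h -> consistent h (rcons hist (x, None)) -> zeroon h c.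
    move=> h' Hh'; rewrite /consistent all_rcons => /andP [_ ?]; exact: Hz.
  have [c' [E [C Z]]] := IH (rcons hist (x, None)) c S1 Hall Hch S2.
  by exists c'; rewrite E.
Qed.

Lemma shatter (hs : X -> bool) (Hs : H hs) c : chainp c -> zeroon hs c ->
  AL_shattered H 1 (size c) (fun u => nth x0 c (size u)).
Proof.
move=> Hch Hz sigma [Hpre Hni].
have Hf : forall i, i.+1 < size sigma -> nth false sigma i = false.
  move=> i Hi; have := Hpre i.+1 Hi; rewrite /AL_internal ltnS leqn0 => /andP [_ Hc].
  apply/negP => Ht.
  have : has id (take i.+1 sigma).
    apply/hasP; exists true => //.
    have <- : nth false (take i.+1 sigma) i = true by rewrite nth_take.
    by apply: mem_nth; rewrite size_take Hi.
  by rewrite has_count (eqP Hc).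
move: Hpre Hni Hf.
case En: (size sigma) => [|n] Hpre Hni Hf.
  by exists hs; split => // i; rewrite En.
have Hlt : n < size c.
  have := Hpre n (ltnSn n); rewrite /AL_internal => /andP [].
  by rewrite size_take En ltnSn.
case Hl: (nth false sigma n).
- have [h [Hh [H1 H2]]] := Hch n Hlt.
  exists h; split => // i Hi.
  rewrite size_take En Hi.
  move: Hi; rewrite ltnS leq_eqVlt => /orP [/eqP -> | Hi]; first by rewrite Hl.
  by rewrite Hf ?En // H1.
- exists hs; split => // i Hi.
  rewrite size_take En Hi.
  have Hsz : size c <= n.+1.
    move: Hni; rewrite /AL_internal negb_and -leqNgt En.
    case/orP => // Hcnt.
    exfalso; move: Hcnt; rewrite -leqNgt -has_count.
    move/hasP => [b Hb Hbt]; move: Hb; rewrite Hbt.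
    case/(nthP false) => j Hj Hnj.
    move: Hj; rewrite En ltnS leq_eqVlt => /orP [/eqP Ej | Hj].
      by rewrite Ej Hl in Hnj.
    by rewrite Hf ?En in Hnj.
  move: Hi; rewrite ltnS leq_eqVlt => /orP [/eqP -> | Hi].
    by rewrite Hl; apply: Hz; lia.
  by rewrite Hf ?En // Hz //; lia.
Qed.

End Learn.

Theorem theorem4 (X : Type) (H : (X -> bool) -> Prop) :
  exists L : learner X,
    forall s : seq (X * bool), realizable H s -> le_ext (mistakes L s) (AL H 1).
Proof.
exists (Lrn H) => s [hs [Hs Hall]].
rewrite /AL; case: excluded_middle_informative => [ex|] //=.
case: ex_minnP => k Hk _.
have Hub := decPP Hk.
case: s Hall => [|[x0 y0] s'] Hall; first by [].
have [c' [E [C Z]]] := @main_lem X H x0 hs Hs ((x0,y0)::s') [::] [::] isT Hall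
   (fun k (hk : k < 0) => False_ind _ (notF hk)) (fun h _ _ j (hj : j < 0) => False_ind _ (notF hj)).
rewrite /mistakes -[mistakes_from _ _ _]add0n -E.
exact: Hub _ _ (shatter Hs C Z).
Qed.
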